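(* For every $m\ge1$, the unipotent conjugacy classes of type $(3)$ in $\mathbf{PSL}_3(2^{2m})$ are of type D.
   Context: Type $(3)$ means a single Jordan block of size 3 (regular unipotent). Conjugacy classes are racks with $x\triangleright y=xyx^{-1}$. A subrack $Y$ is decomposable if $Y=R\sqcup S$ with nonempty subracks $R,S$, $Y\triangleright R=R$, $Y\triangleright S=S$. Type D: a decomposable subrack $R\sqcup S$ with $r\in R,s\in S$ and $r\triangleright(s\triangleright(r\triangleright s))\neq s$. *)

(* Defs.v *)
From HB Require Import structures.
From mathcomp Require Import all_boot all_order all_algebra all_fingroup all_solvable all_field.
Set Implicit Arguments. Unset Strict Implicit. Unset Printing Implicit Defensive.
Import GRing.Theory.

Local Open Scope group_scope.

Section Racks.
Variable gT : finGroupType.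
Implicit Types (x y : gT) (Y R S : {set gT}).

Definition rop x y : gT := x * y * x^-1.

Definition is_subrack Y : bool :=
  [forall x in Y, forall y in Y, rop x y \in Y].

Definition rack_act Y R : {set gT} := [set rop y r | y in Y, r in R].

Definition decomposition_of Y R S : Prop :=
  [/\ R != set0, S != set0, [disjoint R & S] & Y = R :|: S] /\
  [/\ is_subrack R, is_subrack S, rack_act Y R = R & rack_act Y S = S].

Definition type_D (O : {set gT}) : Prop :=
  exists (R S : {set gT}),
    [/\ (R :|: S) \subset O, is_subrack (R :|: S),
        decomposition_of (R :|: S) R S &
        exists r, exists s, [/\ r \in R, s \in S & rop r (rop s (rop r s)) != s]].
End Racks.

Section SL3.
Variable F : finFieldType.

Definition SL3 : {set {'GL_3[F]}} := [set g | (\det (GLval g) == 1)%R].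

Lemma SL3_group_set : group_set SL3.
Proof.
apply/group_setP; split; first by rewrite inE GL_1E det1.
move=> x y; rewrite !inE GL_ME => /eqP hx /eqP hy.
by rewrite -mulmxE det_mulmx hx hy mulr1.
Qed.

Canonical SL3_group := Group SL3_group_set.

Definition PSL3 := (SL3 / 'Z(SL3))%g.

(** u is unipotent with a single Jordan block of size 3:
    (u - 1)^3 = 0 and (u - 1)^2 <> 0. *)
Definition regular_unipotent (u : {'GL_3[F]}) : bool :=
  (((GLval u : 'M[F]_3) - 1) ^+ 3 == 0)%R && (((GLval u : 'M[F]_3) - 1) ^+ 2 != 0)%R.
End SL3.

(* Main.v *)
Require Import Defs.
From HB Require Import structures.
From mathcomp Require Import all_boot all_order all_algebra all_fingroup all_solvable all_field.
From mathcomp Require Import ring.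
Module PartA.
Set Implicit Arguments. Unset Strict Implicit. Unset Printing Implicit Defensive.
Import GRing.Theory.
Local Open Scope ring_scope.

Inductive F4 := Z0 | O1 | W1 | W2.

Definition add4 (a b : F4) : F4 :=
  match a, b with
  | Z0, x => x | x, Z0 => x
  | O1, O1 => Z0 | O1, W1 => W2 | O1, W2 => W1
  | W1, O1 => W2 | W1, W1 => Z0 | W1, W2 => O1
  | W2, O1 => W1 | W2, W1 => O1 | W2, W2 => Z0
  end.
Definition mul4 (a b : F4) : F4 :=
  match a, b with
  | Z0, _ => Z0 | _, Z0 => Z0
  | O1, x => x | x, O1 => x
  | W1, W1 => W2 | W1, W2 => O1 | W2, W1 => O1 | W2, W2 => W1
  end.
Definition eq4 (a b : F4) : bool :=
  match a, b with
  | Z0, Z0 | O1, O1 | W1, W1 | W2, W2 => true | _, _ => false end.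

Lemma eq4P a b : eq4 a b = true -> a = b.
Proof. by case: a; case: b. Qed.

Lemma eq4_axiom : Equality.axiom eq4.
Proof. by case; case; constructor. Qed.
HB.instance Definition _ := hasDecEq.Build F4 eq4_axiom.

Definition M4 := seq (seq F4).
Definition get (A : M4) (i j : nat) : F4 := nth Z0 (nth [::] A i) j.
Definition i3 := [:: 0%N; 1%N; 2%N].
Definition mulL (A B : M4) : M4 :=
  [seq [seq add4 (add4 (mul4 (get A i 0) (get B 0 j)) (mul4 (get A i 1) (get B 1 j)))
                 (mul4 (get A i 2) (get B 2 j)) | j <- i3] | i <- i3].
Definition eqL (A B : M4) : bool :=
  all (fun i => all (fun j => eq4 (get A i j) (get B i j)) i3) i3.
Definition I4 : M4 := [:: [:: O1; Z0; Z0]; [:: Z0; O1; Z0]; [:: Z0; Z0; O1]].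
Definition notprop (A B : M4) : bool :=
  has (fun p => has (fun q =>
     ~~ eq4 (mul4 (get A q.1 q.2) (get B p.1 p.2)) (mul4 (get A p.1 p.2) (get B q.1 q.2)))
     [seq (i, j) | i <- i3, j <- i3]) [seq (i, j) | i <- i3, j <- i3].

Section Emb.
Variables (F : fieldType) (w : F).
Hypothesis h2 : 1 + 1 = 0 :> F.
Hypothesis hw : w * w + w + 1 = 0.

Definition f4 (a : F4) : F :=
  match a with Z0 => 0 | O1 => 1 | W1 => w | W2 => w + 1 end.

Lemma xx (x : F) : x + x = 0.
Proof. by rewrite -[x]mul1r -mulrDl h2 mul0r. Qed.
Lemma oppc (x : F) : - x = x.
Proof. by apply/eqP; rewrite eq_sym -subr_eq0 opprK xx. Qed.
Lemma ww : w * w = w + 1.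
Proof. by apply/eqP; rewrite -[w + 1]oppc -addr_eq0 addrA hw. Qed.

Lemma fadd a b : f4 (add4 a b) = f4 a + f4 b.
Proof.
case: a; case: b; rewrite /= ?add0r ?addr0 //;
 rewrite ?addrA ?xx ?add0r ?addr0 //; try by rewrite addrC.
- by rewrite addrC addrA h2 add0r.
- by rewrite -addrA h2 addr0.
- by rewrite addrAC xx add0r.
- by rewrite (addrAC w 1 w) xx add0r h2.
Qed.

Lemma fmul a b : f4 (mul4 a b) = f4 a * f4 b.
Proof.
case: a; case: b; rewrite /= ?mul0r ?mulr0 ?mul1r ?mulr1 //;
 rewrite ?mulrDl ?mulrDr ?mul1r ?mulr1 ?ww ?addrA ?xx ?add0r ?addr0 //.
- by rewrite addrAC xx add0r.
- by rewrite addrAC xx add0r.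
- by rewrite -(addrA _ w w) xx addr0 -addrA h2 addr0.
Qed.

Lemma finj a b : f4 a = f4 b -> a = b.
Proof.
have w0 : w != 0.
  by apply/eqP=> w0; move: hw; rewrite w0 mul0r !add0r; apply/eqP; exact: oner_neq0.
have w1 : w != 1.
  by apply/eqP=> w1; move: hw; rewrite w1 mulr1 h2 add0r => /eqP; rewrite oner_eq0.
have w2 : w + 1 != 0.
  by apply/eqP => h; move: w1; rewrite -[w]addr0 -h addrA xx add0r eqxx.
have w3 : w + 1 != 1.
  by apply/eqP => h; move: w0; rewrite -[w]addr0 -h2 addrA h eqxx.
have w4 : w != w + 1.
  apply/eqP => h. have: w + 0 = w + 1 by rewrite addr0.
  by move/addrI/eqP; rewrite eq_sym oner_eq0.
have n01 : (0 : F) != 1 by rewrite eq_sym oner_neq0.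
have w5 : w + 1 != w by rewrite eq_sym.
have := oner_neq0 F.
case: a; case: b => //= n10 /eqP; rewrite ?(eq_sym 0) ?(eq_sym 1) ?(eq_sym w (w + 1));
  rewrite ?(negbTE w0) ?(negbTE w1) ?(negbTE w2) ?(negbTE w3) ?(negbTE w4) ?(negbTE n01) ?(negbTE n10) ?(negbTE w5) //.
Qed.

Definition fM (A : M4) : 'M[F]_3 := \matrix_(i, j) f4 (get A i j).

Lemma fM_mul A B : fM A *m fM B = fM (mulL A B).
Proof.
apply/matrixP => i j; rewrite !mxE !big_ord_recr big_ord0 /=.
case: i => [[|[|[|i]]] Hi] //; case: j => [[|[|[|j]]] Hj] //;
  by rewrite /mulL /get /= ?fadd ?fmul ?add0r !mxE.
Qed.

Lemma in_i3 x : (x < 3)%N -> x \in i3.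
Proof. by case: x => [|[|[|]]]. Qed.

Lemma eqL_get A B : eqL A B -> forall i j, (i < 3)%N -> (j < 3)%N -> get A i j = get B i j.
Proof.
move=> /allP h i j hi hj; apply: eq4P.
by have /allP := h i (in_i3 hi); apply; apply: in_i3.
Qed.

Lemma fM_eq A B : eqL A B -> fM A = fM B.
Proof.
move=> h; apply/matrixP => i j; rewrite !mxE.
by rewrite (eqL_get h (ltn_ord i) (ltn_ord j)).
Qed.

Lemma fM_I : fM I4 = 1%:M.
Proof.
apply/matrixP => i j; rewrite !mxE.
by case: i => [[|[|[|i]]] Hi] //; case: j => [[|[|[|j]]] Hj].
Qed.

Lemma notpropP A B : notprop A B -> forall l : F, fM A != l *: fM B.
Proof.
move=> /hasP[[i1 j1] /allpairsP[[i j] [hi hj ->]]] /hasP[[i2 j2] /allpairsP[[k l] [hk hl ->]]] /= hne.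
move=> lam; apply/eqP => E.
have e : forall a b, (a < 3)%N -> (b < 3)%N -> f4 (get A a b) = lam * f4 (get B a b).
  move=> a b ha hb.
  by have := congr1 (fun M : 'M[F]_3 => M (Ordinal ha) (Ordinal hb)) E; rewrite /= !mxE.
have lt3 : forall x, x \in i3 -> (x < 3)%N by move=> x; rewrite !inE => /or3P[] /eqP->.
have eqr : forall x, eq4 x x by case.
suff hXY : mul4 (get A k l) (get B i j) = mul4 (get A i j) (get B k l).
  by move: hne; rewrite hXY eqr.
apply: finj; rewrite !fmul !e ?lt3 //.
by rewrite -!mulrA [f4 (get B k l) * _]mulrC.
Qed.
End Emb.

End PartA.
Import PartA.

Module PartB.
Set Implicit Arguments. Unset Strict Implicit. Unset Printing Implicit Defensive.
Import GRing.Theory FinRing.Theory.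
Local Open Scope ring_scope.

Section Ch.
Variables (F : finFieldType) (m : nat).
Hypotheses (m0 : (0 < m)%N) (cF : #|F| = (2 ^ (2 * m))%N).

Lemma char2 : 1 + 1 = 0 :> F.
Proof.
have := card_finPcharP cF (isT : prime 2) => /pcharf0.
by rewrite -[2%N]/(1 + 1)%N natrD.
Qed.

Lemma omega_ex : exists w : F, w * w + w + 1 = 0.
Proof.
have d3 : (3 %| #|[set: {unit F}]|)%N.
  rewrite card_finField_unit cF expnM /=.
  rewrite -subn1 -eqn_mod_dvd; last by rewrite expn_gt0.
  by rewrite -modnXm /= exp1n.
have [x _ ox] := Cauchy (isT : prime 3) d3.
exists (val x).
have x3 : (val x) ^+ 3 = 1.
  by rewrite -val_unitX -ox expg_order.
have x1 : val x != 1.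
  apply/eqP => h. have : x = 1%g by apply: val_inj.
  by move=> e; move: ox; rewrite e order1.
have : (val x - 1) * (val x * val x + val x + 1) = 0.
  have -> : (val x - 1) * (val x * val x + val x + 1) = val x ^+ 3 - 1 by ring.
  by rewrite x3 subrr.
by move/eqP; rewrite mulf_eq0 subr_eq0 (negbTE x1) => /eqP.
Qed.
End Ch.

Section Cent.
Variable F : finFieldType.
Hypothesis h2 : 1 + 1 = 0 :> F.

Definition mkG (M : 'M[F]_3) : {'GL_3[F]} := insubd (1%g : {'GL_3[F]}) M.

Lemma mkGK M : M \in unitmx -> GLval (mkG M) = M.
Proof. by move=> hM; rewrite /mkG insubdK. Qed.

Lemma mul_delta_r (A : 'M[F]_3) i j k l :
  (A *m (delta_mx i j : 'M[F]_3)) k l = if l == j then A k i else 0.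
Proof.
rewrite mxE (bigD1 i) //= mxE eqxx /= big1 ?addr0.
  by case: eqP; rewrite ?mulr1 ?mulr0.
by move=> p /negbTE; rewrite mxE => ->; rewrite mulr0.
Qed.

Lemma mul_delta_l (A : 'M[F]_3) i j k l :
  ((delta_mx i j : 'M[F]_3) *m A) k l = if k == i then A j l else 0.
Proof.
rewrite mxE (bigD1 j) //= mxE eqxx andbT big1 ?addr0.
  by case: eqP; rewrite ?mul1r ?mul0r.
by move=> p /negbTE; rewrite mxE => ->; rewrite andbF mul0r.
Qed.

Lemma xxF (x : F) : x + x = 0.
Proof. by rewrite -[x]mul1r -mulrDl h2 mul0r. Qed.

Lemma xxM (A : 'M[F]_3) : A + A = 0.
Proof. by apply/matrixP => i j; rewrite !mxE xxF. Qed.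

Lemma Tsq (i j : 'I_3) : i != j ->
  (1 + delta_mx i j) *m (1 + delta_mx i j) = 1 :> 'M[F]_3.
Proof.
move=> ij; rewrite mulmxDl !mulmxDr !mulmx1 mul1mx mul_delta_mx_cond eq_sym (negbTE ij).
by rewrite mulr0n addr0 -addrA xxM addr0.
Qed.

Lemma det_T (i j : 'I_3) : i != j -> \det (1 + delta_mx i j : 'M[F]_3) = 1.
Proof.
move=> ij; set d := \det _.
have dd : d * d = 1 by rewrite -det_mulmx Tsq // det1.
have : (d - 1) * (d - 1) = 0.
  have -> : (d - 1) * (d - 1) = d * d - (d + d) + 1 by ring.
  by rewrite dd xxF subr0 h2.
by move/eqP; rewrite mulf_eq0 orbb subr_eq0 => /eqP.
Qed.

Lemma T_unit (i j : 'I_3) : i != j -> (1 + delta_mx i j : 'M[F]_3) \in unitmx.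
Proof. by move=> ij; rewrite unitmxE det_T // unitr1. Qed.

Lemma center_scalar (z : {'GL_3[F]}) : z \in ('Z(SL3 F))%g -> GLval z = (GLval z ord0 ord0)%:M.
Proof.
case/setIP => _ /centP cz.
have key : forall i j : 'I_3, i != j -> forall k l,
    (if l == j then GLval z k i else 0) = (if k == i then GLval z j l else 0).
  move=> i j ij k l; rewrite -mul_delta_r -mul_delta_l.
  have t : mkG (1 + delta_mx i j) \in SL3 F by rewrite inE mkGK ?T_unit ?det_T.
  move: (cz _ t) => /(congr1 (@GLval 3 F)); rewrite !GL_MxE mkGK ?T_unit //.
  by rewrite mulmxDr mulmxDl mulmx1 mul1mx => /addrI ->.
have off : forall k i : 'I_3, k != i -> GLval z k i = 0.
  move=> k i ki; have := key i (lift i ord0) (neq_lift _ _) k (lift i ord0).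
  by rewrite eqxx (negbTE ki).
have diag : forall i j : 'I_3, i != j -> GLval z i i = GLval z j j.
  by move=> i j ij; have := key i j ij i j; rewrite !eqxx.
apply/matrixP => k l; rewrite mxE.
case: (eqVneq k l) => [<-|kl]; last by rewrite mulr0n off.
case: (eqVneq k ord0) => [->//|kn].
by rewrite (diag ord0 k) // eq_sym.
Qed.
End Cent.

Section Jordan.
Variable F : fieldType.

Definition Qm : 'M[F]_3 := \matrix_(k, l) ((((l : nat) == k) || ((l : nat) == k.+1))%:R).

Lemma sum3 (V : zmodType) (f : 'I_3 -> V) :
  \sum_(k < 3) f k = f (inord 0) + f (inord 1) + f (inord 2).
Proof.
rewrite !big_ord_recr big_ord0 /= add0r.
by congr (f _ + f _ + f _); apply: val_inj; rewrite /= inordK.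
Qed.

Lemma jordan (u : 'M[F]_3) : (u - 1) ^+ 3 = 0 -> (u - 1) ^+ 2 != 0 ->
  exists2 P, P \in unitmx & P *m u = Qm *m P.
Proof.
set N := u - 1 => N3 N2.
have [i hi] : exists i, row i (N ^+ 2) != 0.
  case: (pickP (fun i => row i (N ^+ 2) != 0)) => [i hi|h]; first by exists i.
  have N20 : N ^+ 2 = 0.
    by apply/row_matrixP => k; rewrite row0; apply/eqP; apply/negbFE; exact: h k.
  by rewrite N20 eqxx in N2.
pose w : 'rV[F]_3 := delta_mx 0 i.
pose v (k : nat) := w *m N ^+ k.
have vS : forall k j, v k *m N ^+ j = v (k + j)%N.
  by move=> k j; rewrite /v -mulmxA mulmxE -exprD.
have v3 : v 3%N = 0 by rewrite /v N3 mulmx0.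
have v4 : v 4%N = 0 by rewrite -[4%N]/(3 + 1)%N -vS v3 mul0mx.
have v2 : v 2%N != 0 by rewrite /v -rowE.
pose P : 'M[F]_3 := \matrix_(k < 3) v k.
have rP : forall k : 'I_3, row k P = v k by move=> k; rewrite rowK.
exists P.
  rewrite -row_free_unit; apply: inj_row_free => x hx.
  have E : x 0 (inord 0) *: v 0%N + x 0 (inord 1) *: v 1%N + x 0 (inord 2) *: v 2%N = 0.
    by rewrite -hx mulmx_sum_row sum3 !rP !inordK.
  have c0 : x 0 (inord 0) = 0.
    move/(congr1 (mulmx^~ (N ^+ 2))): E; rewrite mul0mx !mulmxDl -!scalemxAl !vS v3 v4 !scaler0 !addr0.
    by move/eqP; rewrite scaler_eq0 (negbTE v2) orbF => /eqP.
  have c1 : x 0 (inord 1) = 0.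
    move/(congr1 (mulmx^~ (N ^+ 1))): E; rewrite c0 scale0r add0r mul0mx !mulmxDl -!scalemxAl !vS v3 !scaler0 !addr0.
    by move/eqP; rewrite scaler_eq0 (negbTE v2) orbF => /eqP.
  have c2 : x 0 (inord 2) = 0.
    move: E; rewrite c0 c1 !scale0r !add0r.
    by move/eqP; rewrite scaler_eq0 (negbTE v2) orbF => /eqP.
  apply/rowP => k; rewrite mxE -(inord_val k).
  by case: k => [[|[|[|k]]] Hk] //=.
have uN : u = N + 1 by rewrite /N subrK.
apply/row_matrixP => k; rewrite !row_mul rP uN mulmxDr mulmx1 -[N]expr1 vS.
rewrite mulmx_sum_row sum3 !rP !inordK // !mxE -(inord_val k).
case: k => [[|[|[|k]]] Hk] //=; rewrite !inordK //= ?scale1r ?scale0r ?add0r ?addr0 ?v3 ?add0r //; exact: addrC.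
Qed.
End Jordan.

End PartB.
Import PartB.

Module PartC.
Set Implicit Arguments. Unset Strict Implicit. Unset Printing Implicit Defensive.
Import GRing.Theory FinRing.Theory.

Definition Jc : M4 := [:: [:: O1; O1; Z0]; [:: Z0; O1; O1]; [:: Z0; Z0; O1]].
Definition Sc : M4 := [:: [:: O1; W2; Z0]; [:: O1; W2; W2]; [:: W2; Z0; W2]].
Definition Gc : M4 := [:: [:: O1; Z0; Z0]; [:: Z0; W1; Z0]; [:: W1; O1; W2]].
Definition Gi : M4 := [:: [:: O1; Z0; Z0]; [:: Z0; W2; Z0]; [:: W2; O1; W1]].
Definition R0c : seq M4 := [:: [:: [:: Z0; Z0; W1]; [:: O1; W2; W1]; [:: W1; W1; W1]];
 [:: [:: O1; Z0; Z0]; [:: W2; W1; W1]; [:: W2; O1; W1]];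
 [:: [:: O1; O1; Z0]; [:: Z0; O1; O1]; [:: Z0; Z0; O1]];
 [:: [:: O1; W1; W1]; [:: W2; W1; W1]; [:: W1; Z0; W1]];
 [:: [:: O1; W1; W2]; [:: Z0; W2; W2]; [:: W2; W1; W2]];
 [:: [:: W1; Z0; W1]; [:: Z0; W2; W2]; [:: W2; W1; Z0]];
 [:: [:: W1; O1; Z0]; [:: W2; W1; O1]; [:: W2; O1; O1]];
 [:: [:: W1; W1; W1]; [:: O1; W2; W2]; [:: W1; W1; Z0]];
 [:: [:: W2; W1; W2]; [:: W2; W1; O1]; [:: W1; Z0; Z0]] ].
Definition inv3 (X : M4) : M4 := mulL X (mulL X X).
Definition unitc (X : M4) := eqL (mulL X (inv3 X)) I4.
Definition closedc (Y : M4) :=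
  all (fun X => has (fun Z => eqL (mulL (mulL (inv3 Y) X) Y) Z) R0c) R0c.
Definition Wc : M4 :=
  mulL (mulL Jc (mulL (mulL Sc (mulL (mulL Jc Sc) (inv3 Jc))) (inv3 Sc))) (inv3 Jc).

Lemma chk_units : all unitc R0c && unitc Jc && unitc Sc. Proof. by vm_compute. Qed.
Lemma chk_G : eqL (mulL Gi Gc) I4. Proof. by vm_compute. Qed.
Lemma chk_closed : closedc Jc && closedc Sc. Proof. by vm_compute. Qed.
Lemma chk_J : Jc \in R0c. Proof. by vm_compute. Qed.
Lemma chk_np : all (fun X => notprop Sc X) R0c. Proof. by vm_compute. Qed.
Lemma chk_S : eqL (mulL (mulL Gc Jc) Gi) Sc. Proof. by vm_compute. Qed.
Lemma chk_W : notprop Wc Sc. Proof. by vm_compute. Qed.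

Section Main.
Variables (F : finFieldType) (w : F).
Hypothesis h2 : (1 + 1 = 0 :> F)%R.
Hypothesis hw : (w * w + w + 1 = 0)%R.
Variable P : 'M[F]_3.
Hypothesis hP : P \in unitmx.

Local Notation G := {'GL_3[F]}.
Local Notation Z := ('Z(SL3 F))%g.
Local Open Scope group_scope.

Definition e (X : M4) : G := mkG (fM w X).
Definition p : G := mkG P.

Lemma GLinj (x y : G) : GLval x = GLval y -> x = y.
Proof. exact: val_inj. Qed.

Lemma valp : GLval p = P. Proof. exact: mkGK. Qed.

Lemma unit_of_code X Y : eqL (mulL X Y) I4 -> fM w X \in unitmx.
Proof. by move=> h; have [] := mulmx1_unit (etrans (fM_mul h2 hw X Y) (etrans (fM_eq w h) (fM_I w))). Qed.

Lemma eK2 X Y : eqL (mulL X Y) I4 -> GLval (e X) = fM w X.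
Proof. by move=> h; apply: mkGK; apply: unit_of_code h. Qed.

Lemma eK X : unitc X -> GLval (e X) = fM w X.
Proof. exact: eK2. Qed.

Lemma invmx_code X Y : eqL (mulL X Y) I4 -> invmx (fM w X) = fM w Y.
Proof.
move=> h; have XY : (fM w X *m fM w Y = 1%:M)%R.
  by rewrite fM_mul // (fM_eq w h) fM_I.
have uX := unit_of_code h.
by rewrite -[RHS]mul1mx -(mulVmx uX) -mulmxA XY mulmx1.
Qed.

Lemma conj_scalar (z : G) c x : GLval z = (c%:M)%R -> z ^ x = z.
Proof.
move=> hz; apply: GLinj.
rewrite /conjg !GL_MxE GL_VxE hz -scalar_mxC mulmxA mulVmx ?mul1mx //.
exact: GL_unitmx.
Qed.

Lemma allN (x : G) : x \in 'N(Z).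
Proof.
rewrite inE; apply/subsetP => y; rewrite mem_conjg => hy.
have [c hc] : exists c, GLval (y ^ x^-1) = (c%:M)%R by eexists; exact: center_scalar hy.
by rewrite -(conjgK x^-1 y) invgK (conj_scalar x hc).
Qed.

Definition sigm (x : G) : coset_of Z := coset Z (x ^ p).

Lemma sigM x y : sigm (x * y) = sigm x * sigm y.
Proof. by rewrite /sigm conjMg morphM ?allN. Qed.

Lemma sigV x : sigm x^-1 = (sigm x)^-1.
Proof. by rewrite /sigm conjVg morphV ?allN. Qed.

Lemma sigJ x y : sigm (x ^ y) = sigm x ^ sigm y.
Proof. by rewrite /conjg !sigM sigV. Qed.

Lemma sig_eq x y : sigm x = sigm y -> exists c, GLval x = (c *: GLval y)%R.
Proof.
move=> h.
have : coset Z ((x * y^-1) ^ p) = 1.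
  by rewrite -/(sigm _) sigM sigV h mulgV.
move/coset_idr => /(_ (allN _)) hz.
have hc := center_scalar h2 hz.
have e1 : x * y^-1 = (x * y^-1) ^ p.
  by rewrite -{1}(conjgK p (x * y^-1)) (conj_scalar _ hc).
exists (GLval ((x * y^-1) ^ p) ord0 ord0).
by rewrite -mul_scalar_mx -hc -e1 -GL_MxE mulgKV.
Qed.

Lemma eJ X Y Zc : unitc X -> unitc Y -> unitc Zc ->
  eqL (mulL (mulL (inv3 Y) X) Y) Zc -> e X ^ e Y = e Zc.
Proof.
move=> hX hY hZ h; apply: GLinj.
rewrite /conjg !GL_MxE GL_VxE !eK // (invmx_code hY) mulmxA !fM_mul //.
exact: fM_eq.
Qed.

Lemma eJ2 X Y Yi Zc : unitc X -> eqL (mulL Y Yi) I4 -> unitc Zc ->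
  eqL (mulL (mulL Yi X) Y) Zc -> e X ^ e Y = e Zc.
Proof.
move=> hX hY hZ h; apply: GLinj.
rewrite /conjg !GL_MxE GL_VxE (eK hX) (eK hZ) (eK2 hY) (invmx_code hY) mulmxA !fM_mul //.
exact: fM_eq.
Qed.

Lemma unitR0 X : X \in R0c -> unitc X.
Proof. by move: chk_units => /andP[/andP[/allP h _] _] /h. Qed.

Definition R0s : {set coset_of Z} := [set x | x \in [seq sigm (e X) | X <- R0c]].

Lemma normR0 Y : unitc Y -> closedc Y -> sigm (e Y) \in 'N(R0s).
Proof.
move=> hY /allP cY; rewrite inE; apply/subsetP => _ /imsetP[x + ->].
rewrite inE => /mapP[X hX ->].
have /hasP[Zc hZ hXZ] := cY X hX.
rewrite -sigJ (eJ (unitR0 hX) hY (unitR0 hZ) hXZ) inE.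
by apply/mapP; exists Zc.
Qed.

Lemma rop_conj (gT : finGroupType) (x y : gT) : rop x y = y ^ x^-1.
Proof. by rewrite /rop /conjg invgK mulgA. Qed.

Lemma class_rop (gT : finGroupType) (H : {group gT}) c x y :
  x \in H -> y \in c ^: H -> rop x y \in c ^: H.
Proof.
move=> hx /imsetP[h hh ->]; rewrite rop_conj -conjgM.
by apply: memJ_class; rewrite groupM ?groupV.
Qed.

Lemma detGi : (\det (fM w Gi) = 1)%R.
Proof.
rewrite det_trig.
  rewrite !big_ord_recr big_ord0 /= !mxE /= !mul1r mulrDl mul1r (ww h2 hw).
  by rewrite addrAC (xx h2) add0r.
apply/is_trig_mxP => i j; rewrite mxE.
by case: i => [[|[|[|i]]] Hi] //; case: j => [[|[|[|j]]] Hj].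
Qed.

Lemma typeD_main (u : G) : u \in SL3 F -> (P *m GLval u = fM w Jc *m P)%R ->
  type_D ((coset Z u) ^: PSL3 F).
Proof.
move=> uSL hPu.
have uJ : unitc Jc by move: chk_units => /andP[/andP[_ ->]].
have uS : unitc Sc by move: chk_units => /andP[_ ->].
have ua : e Jc ^ p = u.
  apply: GLinj; rewrite /conjg !GL_MxE GL_VxE valp (eK uJ) -hPu mulmxA mulVmx // mul1mx //.
set r := coset Z u.
have rE : r = sigm (e Jc) by rewrite /sigm ua.
set s := sigm (e Sc).
have sE : s = r ^ sigm (e Gi).
  by rewrite rE -sigJ (eJ2 uJ chk_G uS chk_S).
have giP : sigm (e Gi) \in PSL3 F.
  apply: mem_quotient; rewrite inE /conjg !GL_MxE GL_VxE valp (eK2 chk_G).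
  by rewrite !det_mulmx det_inv detGi mul1r mulVf // -unitfE -unitmxE.
have rP : r \in PSL3 F by apply: mem_quotient.
have sP : s \in PSL3 F by rewrite sE groupJ.
pose H := <<[set r; s]>>%G.
have HP : H \subset PSL3 F by rewrite gen_subG subUset !sub1set rP sP.
have rH : r \in H by rewrite mem_gen // !inE eqxx.
have sH : s \in H by rewrite mem_gen // !inE eqxx orbT.
have RH : r ^: H \subset H by apply: class_subG.
have SH : s ^: H \subset H by apply: class_subG.
have YH : r ^: H :|: s ^: H \subset H by rewrite subUset RH SH.
have sub_rack : forall c, is_subrack (c ^: H) -> True by [].
have subr : forall c, c \in H -> is_subrack (c ^: H).
  move=> c cH; apply/forall_inP => x hx; apply/forall_inP => y hy.
  by apply: class_rop => //; apply: (subsetP (class_subG cH (subxx _))).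
have act : forall c, c ^: H \subset r ^: H :|: s ^: H ->
    rack_act (r ^: H :|: s ^: H) (c ^: H) = c ^: H.
  move=> c cY; apply/eqP; rewrite eqEsubset; apply/andP; split.
    apply/subsetP => _ /imset2P[y x hy hx ->].
    by apply: class_rop => //; apply: (subsetP YH).
  apply/subsetP => x hx; apply/imset2P; exists x x => //.
    exact: (subsetP cY).
  by rewrite /rop mulgK.
have R0n : H \subset 'N(R0s).
  rewrite gen_subG subUset !sub1set rE; apply/andP; split; apply: normR0 => //;
    by case/andP: chk_closed.
have rR0 : r \in R0s by rewrite rE inE; apply/mapP; exists Jc => //; exact: chk_J.
have RR0 : r ^: H \subset R0s by rewrite class_sub_norm.
have sR0 : s \notin R0s.
  apply/negP; rewrite inE => /mapP[X hX] /sig_eq[c hc].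
  move: hc; rewrite (eK uS) (eK (unitR0 hX)) => /eqP.
  by move: chk_np => /allP /(_ X hX) /(notpropP h2 hw) /(_ c) /negbTE ->.
exists (r ^: H), (s ^: H); split.
- rewrite subUset; apply/andP; split; apply/subsetP => _ /imsetP[h hh ->].
    by apply: memJ_class; apply: (subsetP HP).
  by rewrite sE -conjgM memJ_class // groupM //; apply: (subsetP HP).
- apply/forall_inP => x hx; apply/forall_inP => y hy.
  have xH : x \in H by apply: (subsetP YH).
  by case/setUP: hy => hy; apply/setUP; [left|right]; apply: class_rop.
- split; split => //.
  + by apply/set0Pn; exists r; apply: class_refl.
  + by apply/set0Pn; exists s; apply: class_refl.
  + rewrite -setI_eq0; apply/eqP/setP => y; rewrite !inE.
    apply/negbTE/negP => /andP[/imsetP[h1 h1H ->] /imsetP[h2' h2H e12]].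
    have : s \in r ^: H.
      by rewrite -(conjgK h2' s) -e12 -conjgM memJ_class // groupM ?groupV.
    by move/(subsetP RR0); apply/negP.
  + exact: subr.
  + exact: subr.
  + by apply: act; rewrite subsetUl.
  + by apply: act; rewrite subsetUr.
- exists r, s; split; [exact: class_refl | exact: class_refl |].
  rewrite /rop /s rE -!sigV -!sigM.
  apply/negP => /eqP /sig_eq[c].
  rewrite (eK uS) !GL_MxE !GL_VxE (eK uJ) (eK uS) (invmx_code uJ) (invmx_code uS) !fM_mul //.
  move/eqP; apply/negP.
  by apply: notpropP => //; vm_compute.
Qed.

End Main.

Lemma Qm_J (F : fieldType) (w : F) : Qm F = fM w Jc.
Proof.
apply/matrixP => i j; rewrite !mxE.
by case: i => [[|[|[|i]]] Hi] //; case: j => [[|[|[|j]]] Hj].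
Qed.


End PartC.
Import PartC.

Theorem mainTheorem15 (m : nat) (F : finFieldType) :
  (0 < m)%N -> #|F| = (2 ^ (2 * m))%N ->
  forall u : {'GL_3[F]}, u \in SL3 F -> regular_unipotent u ->
  type_D ((coset 'Z(SL3 F) u) ^: PSL3 F)%g.
Proof.
move=> m0 cF u uSL /andP[/eqP N3 N2].
have h2 := char2 cF.
have [w hw] := omega_ex cF.
have [P hP hPu] := jordan N3 N2.
apply: (typeD_main h2 hw hP uSL).
by rewrite hPu (Qm_J w).
Qed.
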